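(* Let $m,n\ge1$, and for each $i\in[m]=\{1,\dots,m\}$ let $f_i:\mathbb{R}^n\to\mathbb{R}$ be differentiable with $s_i$-Lipschitz gradient ($s_i>0$) and $c_i$-strongly convex ($c_i>0$). Let $\alpha_i>0$ with $\sum_i\alpha_i=1$, $\beta_i>0$, $\delta>0$, and $0<\sigma_i<\frac{\sqrt{2c_i}}{\sqrt{2c_i}+\sqrt{\beta_i}}$. Let $\{w^k\}=\{(u^k,\lambda^k,z^k)\}_{k\ge0}$, with $u^k=(u_1^k,\dots,u_m^k)\in\mathbb{R}^{mn}$, $\lambda^k=(\lambda_1^k,\dots,\lambda_m^k)\in\mathbb{R}^{mn}$, $z^k\in\mathbb{R}^n$, be generated from arbitrary initial points by: for $k\ge0$, $i\in[m]$, (i) $u_i^{k+1}$ satisfies $\|e_i^k(u_i^{k+1})\|\le\sigma_i\|e_i^k(u_i^k)\|$, where $e_i^k(u_i)=\nabla f_i(u_i)-\lambda_i^k+\beta_i(u_i-z^k)$; (ii) $\lambda_i^{k+1}=\lambda_i^k-\beta_i(u_i^{k+1}-z^k)$; (iii) $z^{k+1}=\frac{1}{1+\delta}\cdot\frac{\sum_{i}\alpha_i(\beta_iu_i^{k+1}-\lambda_i^{k+1})}{\sum_i\alpha_i\beta_i}+\frac{\delta}{1+\delta}z^k$. Then for every $k\ge0$ and every $w=(u,\lambda,z)\in\mathbb{R}^{mn}\times\mathbb{R}^{mn}\times\mathbb{R}^n$, $$(w^{k+1}-w)^{\top}F(w^{k+1})\le(u^{k+1}-u)^{\top}\nabla_uL_{\alpha,\beta}(u^{k+1},\lambda^k,z^k)+\tfrac12\Big(\|v^k-v\|_{H_1}^2-\|v^{k+1}-v\|_{H_1}^2-\|v^k-v^{k+1}\|_{H_1}^2\Big),$$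 where $v=(\lambda,z)$, $v^k=(\lambda^k,z^k)$, and $$H_1=\begin{pmatrix}I_\alpha I_\beta^{-1}& I_\alpha B\\ B^{\top}I_\alpha&(1+\delta)B^{\top}I_\alpha I_\beta B\end{pmatrix}\succ0.$$
   Context: Notation: $B=(I_n,\dots,I_n)^{\top}\in\mathbb{R}^{mn\times n}$ ($m$ copies of the $n\times n$ identity); $I_\alpha=\mathrm{diag}(\alpha_1I_n,\dots,\alpha_mI_n)$ and $I_\beta=\mathrm{diag}(\beta_1I_n,\dots,\beta_mI_n)$; $\nabla f(u)=(\nabla f_1(u_1),\dots,\nabla f_m(u_m))\in\mathbb{R}^{mn}$. The augmented Lagrangian is $L_{\alpha,\beta}(u,\lambda,z)=\sum_{i=1}^m\alpha_i\big(f_i(u_i)-\lambda_i^{\top}(u_i-z)+\frac{\beta_i}{2}\|u_i-z\|^2\big)$, so $\nabla_uL_{\alpha,\beta}(u,\lambda,z)$ has $i$-th block $\alpha_i(\nabla f_i(u_i)-\lambda_i+\beta_i(u_i-z))$. The map $F$ is $F(w)=\big(I_\alpha(\nabla f(u)-\lambda),\ I_\alpha(u-Bz),\ B^{\top}I_\alpha\lambda\big)$. For a symmetric positive definite matrix $H$, $\|x\|_H=(x^{\top}Hx)^{1/2}$. *)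

(* Defs.v *)
From HB Require Import structures.
From mathcomp Require Import all_boot all_order all_algebra.
From mathcomp Require Import all_classical all_reals all_analysis.
Set Implicit Arguments. Unset Strict Implicit. Unset Printing Implicit Defensive.
Import Order.TTheory GRing.Theory Num.Theory.
Import numFieldNormedType.Exports.
Local Open Scope ring_scope.

Section Defs.
Variable R : realType.

Definition dotv d (x y : 'cV[R]_d) : R := (x^T *m y) ord0 ord0.
Definition enorm d (x : 'cV[R]_d) : R := Num.sqrt (dotv x x).

Definition Hnorm d (H : 'M[R]_d) (x : 'cV[R]_d) : R :=
  Num.sqrt ((x^T *m H *m x) ord0 ord0).

Definition posdef d (H : 'M[R]_d) : Prop :=
  H^T = H /\ forall x : 'cV[R]_d, x != 0 -> 0 < (x^T *m H *m x) ord0 ord0.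

Definition is_gradient d (f : 'cV[R]_d -> R) (g : 'cV[R]_d -> 'cV[R]_d) : Prop :=
  forall x, differentiable f x /\ forall h, 'd f x h = dotv (g x) h.

Definition lipschitz_map d (g : 'cV[R]_d -> 'cV[R]_d) (s : R) : Prop :=
  forall x y, enorm (g x - g y) <= s * enorm (x - y).

Definition strongly_convex d (f : 'cV[R]_d -> R) (c : R) : Prop :=
  forall x y (t : R), 0 <= t <= 1 ->
    f (t *: x + (1 - t) *: y) <=
      t * f x + (1 - t) * f y - c / 2 * t * (1 - t) * enorm (x - y) ^+ 2.

Variables m n : nat.

(* i-th block u_i in R^n of u = (u_1,...,u_m) in R^{mn} *)
Definition blk (u : 'cV[R]_(m * n)) (i : 'I_m) : 'cV[R]_n :=
  (row i (vec_mx u^T))^T.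

(* stacking (u_1,...,u_m) into R^{mn} *)
Definition stk (g : 'I_m -> 'cV[R]_n) : 'cV[R]_(m * n) :=
  (mxvec (\matrix_(i < m) (g i)^T))^T.

(* B = (I_n, ..., I_n)^T *)
Definition Bmx : 'M[R]_(m * n, n) :=
  (\matrix_(j < n) mxvec (\matrix_(i < m, l < n) ((l == j)%:R : R)))^T.

(* I_a = diag(a_1 I_n, ..., a_m I_n) *)
Definition Idiag (a : 'I_m -> R) : 'M[R]_(m * n) :=
  diag_mx (mxvec (\matrix_(i < m, l < n) a i)).

Definition gradF (grad : 'I_m -> 'cV[R]_n -> 'cV[R]_n) (u : 'cV[R]_(m * n)) :=
  stk (fun i => grad i (blk u i)).

Definition gradL (grad : 'I_m -> 'cV[R]_n -> 'cV[R]_n) (alpha beta : 'I_m -> R)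
  (u lam : 'cV[R]_(m * n)) (z : 'cV[R]_n) : 'cV[R]_(m * n) :=
  stk (fun i => alpha i *: (grad i (blk u i) - blk lam i + beta i *: (blk u i - z))).

Definition Fmap (grad : 'I_m -> 'cV[R]_n -> 'cV[R]_n) (alpha : 'I_m -> R)
  (u lam : 'cV[R]_(m * n)) (z : 'cV[R]_n) : 'cV[R]_(m * n + (m * n + n)) :=
  col_mx (Idiag alpha *m (gradF grad u - lam))
    (col_mx (Idiag alpha *m (u - Bmx *m z)) (Bmx^T *m Idiag alpha *m lam)).

Definition wvec (u lam : 'cV[R]_(m * n)) (z : 'cV[R]_n) : 'cV[R]_(m * n + (m * n + n)) :=
  col_mx u (col_mx lam z).

Definition vvec (lam : 'cV[R]_(m * n)) (z : 'cV[R]_n) : 'cV[R]_(m * n + n) :=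
  col_mx lam z.

Definition H1 (alpha beta : 'I_m -> R) (delta : R) : 'M[R]_(m * n + n) :=
  block_mx (Idiag alpha *m invmx (Idiag beta)) (Idiag alpha *m Bmx)
           (Bmx^T *m Idiag alpha)
           ((1 + delta) *: (Bmx^T *m Idiag alpha *m Idiag beta *m Bmx)).

End Defs.

(* Main.v *)
Require Import Defs.
From HB Require Import structures.
From mathcomp Require Import all_boot all_order all_algebra.
From mathcomp Require Import all_classical all_reals all_analysis.
From mathcomp Require Import ring lra.
Import Order.TTheory GRing.Theory Num.Theory.
Import numFieldNormedType.Exports.
Local Open Scope ring_scope.
Set Implicit Arguments. Unset Strict Implicit. Unset Printing Implicit Defensive.

Section Dot.
Variables (R : realType) (d : nat).
Implicit Types x y w : 'cV[R]_d.

Lemma dotvE x y : dotv x y = \sum_k x k ord0 * y k ord0.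
Proof. by rewrite /dotv mxE; apply: eq_bigr => k _; rewrite mxE. Qed.

Lemma dotvC x y : dotv x y = dotv y x.
Proof. by rewrite !dotvE; apply: eq_bigr => k _; rewrite mulrC. Qed.

Lemma dotvDl x y w : dotv (x + y) w = dotv x w + dotv y w.
Proof. by rewrite !dotvE -big_split; apply: eq_bigr => k _; rewrite mxE mulrDl. Qed.

Lemma dotvDr x y w : dotv w (x + y) = dotv w x + dotv w y.
Proof. by rewrite !(dotvC w) dotvDl. Qed.

Lemma dotvZl a x y : dotv (a *: x) y = a * dotv x y.
Proof. by rewrite !dotvE mulr_sumr; apply: eq_bigr => k _; rewrite mxE mulrA. Qed.

Lemma dotvZr a x y : dotv y (a *: x) = a * dotv y x.
Proof. by rewrite !(dotvC y) dotvZl. Qed.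

Lemma dotvNl x y : dotv (- x) y = - dotv x y.
Proof. by rewrite -scaleN1r dotvZl mulN1r. Qed.

Lemma dotvNr x y : dotv y (- x) = - dotv y x.
Proof. by rewrite !(dotvC y) dotvNl. Qed.

Lemma dotvBl x y w : dotv (x - y) w = dotv x w - dotv y w.
Proof. by rewrite dotvDl dotvNl. Qed.

Lemma dotvBr x y w : dotv w (x - y) = dotv w x - dotv w y.
Proof. by rewrite dotvDr dotvNr. Qed.

Lemma dotv_sumr (I : finType) (F : I -> 'cV[R]_d) x :
  dotv x (\sum_i F i) = \sum_i dotv x (F i).
Proof.
rewrite dotvE (eq_bigr (fun k => \sum_i x k ord0 * F i k ord0)).
  by rewrite exchange_big; apply: eq_bigr => i _; rewrite dotvE.
by move=> k _; rewrite summxE mulr_sumr.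
Qed.

Lemma dotv_ge0 x : 0 <= dotv x x.
Proof. by rewrite dotvE; apply: sumr_ge0 => k _; rewrite -expr2 sqr_ge0. Qed.

Lemma dotv_gt0 x : x != 0 -> 0 < dotv x x.
Proof.
move=> nz; rewrite lt_def dotv_ge0 andbT; apply: contra nz => /eqP.
rewrite dotvE => /psumr_eq0P H; apply/eqP/matrixP => k l.
rewrite (ord1 l) mxE; apply/eqP; rewrite -sqrf_eq0 expr2; apply/eqP.
by apply: H => // k' _; rewrite -expr2 sqr_ge0.
Qed.

Lemma dotv_mul (H : 'M[R]_d) x y : dotv x (H *m y) = dotv (H^T *m x) y.
Proof. by rewrite /dotv mulmxA trmx_mul trmxK. Qed.

Lemma qf_dot (H : 'M[R]_d) x : (x^T *m H *m x) ord0 ord0 = dotv x (H *m x).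
Proof. by rewrite /dotv mulmxA. Qed.

Lemma polar (H : 'M[R]_d) p r : H^T = H ->
  dotv (p + r) (H *m (p + r)) - dotv r (H *m r) - dotv p (H *m p)
  = 2 * dotv r (H *m p).
Proof.
move=> sH; rewrite mulmxDr !dotvDl !dotvDr.
have -> : dotv p (H *m r) = dotv r (H *m p) by rewrite dotv_mul sH dotvC.
by set A := dotv _ _; set B := dotv _ _; set C := dotv _ _; lra.
Qed.

End Dot.

Lemma dotv_col (R : realType) d d2 (a c : 'cV[R]_d) (b e : 'cV[R]_d2) :
  dotv (col_mx a b) (col_mx c e) = dotv a c + dotv b e.
Proof.
rewrite !dotvE big_split_ord /=; congr (_ + _); apply: eq_bigr => k _;
by rewrite ?col_mxEu ?col_mxEd.
Qed.

Section Blk.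
Variables (R : realType) (m n : nat).
Local Notation V := 'cV[R]_(m * n).
Local Notation B := (Bmx R m n).

Lemma sum_mxvec (F : 'I_(m * n) -> R) :
  \sum_k F k = \sum_i \sum_j F (mxvec_index i j).
Proof.
rewrite (reindex _ (curry_mxvec_bij _ _)) /= pair_bigA.
by apply: eq_bigr => [[i j]] _.
Qed.

Lemma blkE (x : V) i j l : blk x i j l = x (mxvec_index i j) l.
Proof. by rewrite /blk !mxE (ord1 l). Qed.

Lemma blk_ext (x y : V) : (forall i, blk x i = blk y i) -> x = y.
Proof.
move=> H; apply/matrixP => k l; rewrite (ord1 l).
case: (mxvec_indexP k) => i j.
by move: (H i) => /matrixP /(_ j ord0); rewrite !blkE.
Qed.

Lemma blkD (x y : V) i : blk (x + y) i = blk x i + blk y i.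
Proof. by apply/matrixP => j l; rewrite (ord1 l) !mxE. Qed.

Lemma blkN (x : V) i : blk (- x) i = - blk x i.
Proof. by apply/matrixP => j l; rewrite (ord1 l) !mxE. Qed.

Lemma blkB (x y : V) i : blk (x - y) i = blk x i - blk y i.
Proof. by rewrite blkD blkN. Qed.

Lemma blkZ a (x : V) i : blk (a *: x) i = a *: blk x i.
Proof. by apply/matrixP => j l; rewrite (ord1 l) !mxE. Qed.

Lemma blk0 i : blk (0 : V) i = 0.
Proof. by apply/matrixP => j l; rewrite (ord1 l) !mxE. Qed.

Lemma blk_stk (g : 'I_m -> 'cV[R]_n) i : blk (stk g) i = g i.
Proof. by apply/matrixP => j l; rewrite (ord1 l) /blk /stk !mxE mxvecE !mxE. Qed.

Lemma blk_Idiag (a : 'I_m -> R) (x : V) i :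
  blk (Idiag n a *m x) i = a i *: blk x i.
Proof.
apply/matrixP => j l; rewrite (ord1 l) blkE /Idiag mul_diag_mx [RHS]mxE blkE !mxE mxvecE !mxE. done.
Qed.

Lemma BmxE i l j : B (mxvec_index i l) j = (l == j)%:R.
Proof. by rewrite /Bmx !mxE mxvecE mxE. Qed.

Lemma blk_B (w : 'cV[R]_n) i : blk (B *m w) i = w.
Proof.
apply/matrixP => j l; rewrite (ord1 l) blkE mxE.
rewrite (bigD1 j) //= BmxE eqxx mul1r big1 ?addr0 // => j' /negbTE.
by rewrite BmxE eq_sym => ->; rewrite mul0r.
Qed.

Lemma BT_sum (x : V) : B^T *m x = \sum_i blk x i.
Proof.
apply/matrixP => j l; rewrite (ord1 l) summxE mxE sum_mxvec.
apply: eq_bigr => i _; rewrite blkE.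
rewrite (bigD1 j) //= mxE BmxE eqxx mul1r big1 ?addr0 // => j' /negbTE.
by rewrite mxE BmxE => ->; rewrite mul0r.
Qed.

Lemma BTI (a : 'I_m -> R) (x : V) :
  B^T *m Idiag n a *m x = \sum_i a i *: blk x i.
Proof. by rewrite -mulmxA BT_sum; apply: eq_bigr => i _; rewrite blk_Idiag. Qed.

Lemma BTIB (a : 'I_m -> R) (w : 'cV[R]_n) :
  B^T *m Idiag n a *m B *m w = (\sum_i a i) *: w.
Proof.
rewrite -mulmxA BTI scaler_suml; apply: eq_bigr => i _; by rewrite blk_B.
Qed.

Lemma dotv_blk (x y : V) : dotv x y = \sum_i dotv (blk x i) (blk y i).
Proof.
rewrite dotvE sum_mxvec; apply: eq_bigr => i _; rewrite dotvE.
by apply: eq_bigr => j _; rewrite !blkE.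
Qed.

Lemma Idiag_mul (a b : 'I_m -> R) :
  Idiag n a *m Idiag n b = Idiag n (fun i => a i * b i).
Proof.
rewrite /Idiag mulmx_diag; congr diag_mx; apply/matrixP => l k; rewrite (ord1 l).
by case: (mxvec_indexP k) => i j; rewrite !mxE !mxvecE !mxE.
Qed.

Lemma Idiag1 : Idiag (m:=m) n (fun _ => 1 : R) = 1%:M.
Proof.
rewrite /Idiag -diag_const_mx; congr diag_mx; apply/matrixP => l k; rewrite (ord1 l).
by case: (mxvec_indexP k) => i j; rewrite !mxE !mxvecE !mxE.
Qed.

Lemma Idiag_unit (b : 'I_m -> R) : (forall i, b i != 0) -> Idiag n b \in unitmx.
Proof.
move=> nz; rewrite unitmxE det_diag unitfE; apply/prodf_neq0 => k _.
by case: (mxvec_indexP k) => i j; rewrite mxvecE mxE.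
Qed.

Lemma invmx_Idiag (b : 'I_m -> R) : (forall i, b i != 0) ->
  invmx (Idiag n b) = Idiag n (fun i => (b i)^-1).
Proof.
move=> nz; have AB : Idiag n b *m Idiag n (fun i => (b i)^-1) = 1%:M.
  by rewrite Idiag_mul -Idiag1; congr Idiag; apply: funext => i; rewrite mulfV.
by rewrite -[invmx _]mulmx1 -AB mulKmx // Idiag_unit.
Qed.

Lemma tr_Idiag (a : 'I_m -> R) : (Idiag n a)^T = Idiag n a.
Proof. exact: tr_diag_mx. Qed.

End Blk.

Unset Implicit Arguments.

Theorem lemma1 (R : realType) (m n : nat)
  (f : 'I_m -> 'cV[R]_n -> R) (grad : 'I_m -> 'cV[R]_n -> 'cV[R]_n)
  (s c alpha beta sigma : 'I_m -> R) (delta : R)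
  (u lam : nat -> 'cV[R]_(m * n)) (z : nat -> 'cV[R]_n) :
  (0 < m)%N -> (0 < n)%N ->
  (forall i, is_gradient (f i) (grad i)) ->
  (forall i, 0 < s i /\ lipschitz_map (grad i) (s i)) ->
  (forall i, 0 < c i /\ strongly_convex (f i) (c i)) ->
  (forall i, 0 < alpha i) -> \sum_i alpha i = 1 ->
  (forall i, 0 < beta i) -> 0 < delta ->
  (forall i, 0 < sigma i /\
     sigma i < Num.sqrt (2 * c i) / (Num.sqrt (2 * c i) + Num.sqrt (beta i))) ->
  (* (i) inexact u-update *)
  (forall k i,
     let e := fun x : 'cV[R]_n =>
       grad i x - blk (lam k) i + beta i *: (x - z k) in
     enorm (e (blk (u k.+1) i)) <= sigma i * enorm (e (blk (u k) i))) ->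
  (* (ii) multiplier update *)
  (forall k i,
     blk (lam k.+1) i = blk (lam k) i - beta i *: (blk (u k.+1) i - z k)) ->
  (* (iii) z-update *)
  (forall k,
     z k.+1 = (1 + delta)^-1 *:
                ((\sum_i alpha i * beta i)^-1 *:
                   \sum_i alpha i *: (beta i *: blk (u k.+1) i - blk (lam k.+1) i))
              + (delta / (1 + delta)) *: z k) ->
  posdef (H1 n alpha beta delta) /\
  forall (k : nat) (uu ll : 'cV[R]_(m * n)) (zz : 'cV[R]_n),
    dotv (wvec (u k.+1) (lam k.+1) (z k.+1) - wvec uu ll zz)
         (Fmap grad alpha (u k.+1) (lam k.+1) (z k.+1))
    <= dotv (u k.+1 - uu) (gradL grad alpha beta (u k.+1) (lam k) (z k))
       + 2^-1 * (Hnorm (H1 n alpha beta delta) (vvec (lam k) (z k) - vvec ll zz) ^+ 2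
                 - Hnorm (H1 n alpha beta delta) (vvec (lam k.+1) (z k.+1) - vvec ll zz) ^+ 2
                 - Hnorm (H1 n alpha beta delta) (vvec (lam k) (z k) - vvec (lam k.+1) (z k.+1)) ^+ 2).
Proof.
move=> m0 n0 _ _ _ alpha0 _ beta0 delta0 _ _ hlam hz.
have bnz : forall i, beta i != 0 by move=> i; rewrite gt_eqF.
set S := \sum_i alpha i * beta i.
have S0 : 0 < S.
  rewrite /S (bigD1 (Ordinal m0)) //=.
  have h1 : 0 < alpha (Ordinal m0) * beta (Ordinal m0) by rewrite mulr_gt0.
  have h2 : 0 <= \sum_(i | i != Ordinal m0) alpha i * beta i.
    by apply: sumr_ge0 => i _; rewrite mulr_ge0 // ltW.
  lra.
set Ia := Idiag n alpha; set Ib := Idiag n beta; set B := Bmx R m n.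
have D_eq : B^T *m Ia *m Ib *m B = B^T *m Idiag n (fun i => alpha i * beta i) *m B.
  by rewrite -(mulmxA _ Ia) Idiag_mul.
have Hsym : (H1 n alpha beta delta)^T = H1 n alpha beta delta.
  rewrite /H1 tr_block_mx invmx_Idiag // D_eq.
  congr block_mx.
  - rewrite trmx_mul !tr_Idiag !Idiag_mul; congr Idiag; apply: funext => i.
    exact: mulrC.
  - by rewrite trmx_mul trmxK tr_Idiag.
  - by rewrite trmx_mul tr_Idiag.
  - by rewrite linearZ /= !trmx_mul trmxK tr_Idiag mulmxA.
have posH : posdef (H1 n alpha beta delta).
  split => // x nz.
  rewrite qf_dot -(vsubmxK x) in nz *.
  move: (usubmx x) (dsubmx x) nz => a b nz.
  rewrite /H1 mul_block_col dotv_col invmx_Idiag // Idiag_mul D_eq -scalemxAl BTIB.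
  rewrite !dotvDr !dotvZr.
  have t1 : dotv a (Idiag n (fun i => alpha i * (beta i)^-1) *m a)
      = \sum_i alpha i * (beta i)^-1 * dotv (blk a i) (blk a i).
    by rewrite dotv_blk; apply: eq_bigr => i _; rewrite blk_Idiag dotvZr.
  have t2 : dotv a (Ia *m B *m b) = \sum_i alpha i * dotv (blk a i) b.
    by rewrite -mulmxA dotv_blk; apply: eq_bigr => i _; rewrite blk_Idiag blk_B dotvZr.
  have t3 : dotv b (B^T *m Ia *m a) = \sum_i alpha i * dotv (blk a i) b.
    by rewrite BTI dotv_sumr; apply: eq_bigr => i _; rewrite dotvZr dotvC.
  rewrite t1 t2 t3 -/S.
  have key : \sum_i alpha i * (beta i)^-1 * dotv (blk a i) (blk a i)
      + \sum_i alpha i * dotv (blk a i) b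
      + (\sum_i alpha i * dotv (blk a i) b + (1 + delta) * (S * dotv b b))
      = \sum_i alpha i * (beta i)^-1 * dotv (blk a i + beta i *: b) (blk a i + beta i *: b)
        + delta * (S * dotv b b).
    rewrite [X in _ = X + _](eq_bigr (fun i => alpha i * (beta i)^-1 * dotv (blk a i) (blk a i)
       + alpha i * dotv (blk a i) b + alpha i * dotv (blk a i) b
       + alpha i * beta i * dotv b b)); last first.
      move=> i _; rewrite !dotvDl !dotvDr !dotvZl !dotvZr (dotvC b (blk a i)).
      by field; apply: bnz.
    rewrite !big_split /= -mulr_suml -/S; ring.
  rewrite key.
  have tge0 : forall i, 0 <= alpha i * (beta i)^-1 *
      dotv (blk a i + beta i *: b) (blk a i + beta i *: b).
    by move=> i; rewrite mulr_ge0 ?dotv_ge0 // mulr_ge0 // ?invr_ge0 ltW.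
  have sge0 : 0 <= \sum_i alpha i * (beta i)^-1 *
      dotv (blk a i + beta i *: b) (blk a i + beta i *: b).
    by apply: sumr_ge0 => i _.
  case: (eqVneq b 0) => [b0|bnz0]; last first.
    have : 0 < delta * (S * dotv b b) by rewrite mulr_gt0 // mulr_gt0 // dotv_gt0.
    lra.
  have [i ai] : exists i, blk a i != 0.
    apply/existsP; apply: contraR nz; rewrite negb_exists => /forallP H.
    have -> : a = 0.
      by apply: blk_ext => i; rewrite blk0; move: (H i); rewrite negbK => /eqP.
    by rewrite b0 col_mx0.
  rewrite b0 (bigD1 i) //= scaler0 addr0.
  have : 0 < alpha i * (beta i)^-1 * dotv (blk a i) (blk a i).
    by rewrite mulr_gt0 ?dotv_gt0 // mulr_gt0 // invr_gt0.
  have : 0 <= \sum_(j | j != i) alpha j * (beta j)^-1 *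
      dotv (blk a j + beta j *: 0) (blk a j + beta j *: 0).
    by apply: sumr_ge0 => j _; rewrite -b0.
  have : dotv (0 : 'cV[R]_n) 0 = 0 by rewrite dotvE big1 // => j _; rewrite mxE mul0r.
  move=> ->; lra.
have qf_ge0 : forall x, 0 <= dotv x (H1 n alpha beta delta *m x).
  move=> x; case: (eqVneq x 0) => [->|nzx]; first by rewrite mulmx0 dotvE big1 // => k _; rewrite mxE mulr0.
  by rewrite -qf_dot; apply: ltW; apply: (posH.2).
split => // k uu ll zz.
set H := H1 n alpha beta delta.
have Hn : forall x, Hnorm H x ^+ 2 = dotv x (H *m x).
  by move=> x; rewrite /Hnorm sqr_sqrtr qf_dot.
rewrite !Hn.
set a := vvec (lam k) (z k); set b := vvec (lam k.+1) (z k.+1); set v := vvec ll zz.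
have -> : a - v = (a - b) + (b - v) by rewrite addrA subrK.
rewrite polar // mulKf ?pnatr_eq0 //.
have hl : lam k - lam k.+1 = Ib *m (u k.+1 - B *m z k).
  apply: blk_ext => i; rewrite blkB hlam blk_Idiag blkB blk_B.
  by rewrite opprB addrCA subrr addr0.
have V1 : gradL grad alpha beta (u k.+1) (lam k) (z k)
          = Ia *m (gradF grad (u k.+1) - lam k.+1).
  apply: blk_ext => i; rewrite /gradL blk_stk blk_Idiag blkB /gradF blk_stk hlam.
  by congr (_ *: _); rewrite opprB addrA addrAC.
have V2 : Ia *m invmx Ib *m (lam k - lam k.+1) + Ia *m B *m (z k - z k.+1)
          = Ia *m (u k.+1 - B *m z k.+1).
  rewrite hl -mulmxA mulKmx ?Idiag_unit // -mulmxA -mulmxDr; congr (_ *m _).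
  by rewrite mulmxBr addrA subrK.
have V3 : B^T *m Ia *m (lam k - lam k.+1)
          + ((1 + delta) *: (B^T *m Ia *m Ib *m B)) *m (z k - z k.+1)
          = B^T *m Ia *m lam k.+1.
  rewrite hl BTI D_eq /B -scalemxAl BTIB -/S BTI.
  rewrite (eq_bigr (fun i => alpha i *: (beta i *: (blk (u k.+1) i - z k)))); last first.
    by move=> i _; rewrite blk_Idiag blkB blk_B.
  apply/matrixP => j l; rewrite hz !mxE !summxE -/S.
  set U := \sum_i alpha i * beta i * blk (u k.+1) i j l.
  set L := \sum_i alpha i * blk (lam k.+1) i j l.
  have e1 : \sum_i (alpha i *: (beta i *: (blk (u k.+1) i - z k))) j l
            = U - S * z k j l.
    rewrite /U /S mulr_suml -sumrB; apply: eq_bigr => i _; rewrite !mxE; ring.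
  have e2 : \sum_i (alpha i *: (beta i *: blk (u k.+1) i - blk (lam k.+1) i)) j l
            = U - L.
    rewrite /U /L -sumrB; apply: eq_bigr => i _; rewrite !mxE; ring.
  have e3 : \sum_i (alpha i *: blk (lam k.+1) i) j l = L.
    by apply: eq_bigr => i _; rewrite !mxE.
  rewrite e1 e2 e3.
  have d1 : 1 + delta != 0 by rewrite gt_eqF // addr_gt0.
  have s1 : S != 0 by rewrite gt_eqF.
  by field; rewrite d1 s1.
have pe : a - b = col_mx (lam k - lam k.+1) (z k - z k.+1).
  by rewrite /a /b /vvec opp_col_mx add_col_mx.
have be : b - v = col_mx (lam k.+1 - ll) (z k.+1 - zz).
  by rewrite /b /v /vvec opp_col_mx add_col_mx.
rewrite pe be /H /H1 mul_block_col V2 V3 /wvec /Fmap opp_col_mx !add_col_mx.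
rewrite !dotv_col V1 opp_col_mx add_col_mx dotv_col addrA.
exact: lexx.
Qed.
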